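(* Let $G$ be a finite abelian group of type $(m_1,\dots,m_r)$. Then $$\operatorname{diam}^+(G)=\sum_{i=1}^r (m_i-1).$$
   Context: Groups are written additively. A finite abelian group $G$ has type $(m_1,\dots,m_r)$ if $G\cong \mathbb{Z}_{m_1}\oplus\dots\oplus\mathbb{Z}_{m_r}$ with $1\neq m_1\mid m_2\mid\dots\mid m_r$; $r$ is the rank $\operatorname{rk}(G)$. For $A\subseteq G$ let $A_0:=A\cup\{0\}$ and for $\rho\in\mathbb{N}_0$ let $\langle A\rangle^+_\rho:=\rho A_0=\{a_1+\dots+a_\rho: a_i\in A_0\}$ (so $\langle A\rangle_0^+=\{0\}$), the set of elements expressible as a sum of at most $\rho$ elements of $A$. The positive diameter of $G$ with respect to $A$ is $\operatorname{diam}^+_A(G):=\min\{\rho\in\mathbb{N}_0:\langle A\rangle^+_\rho=G\}$ (with $\min\varnothing=\infty$, so it is finite iff $A$ generates $G$). The absolute diameter is $\operatorname{diam}^+(G):=\max\{\operatorname{diam}^+_A(G): A\subseteq G,\ \langle A\rangle=G\}$. *)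

(* Defs.v *)
(* Groups are finite groups (finGroupType), written
   multiplicatively; "sum" of the paper = group product, 0 = 1. *)
From mathcomp Require Import all_boot all_order all_fingroup all_solvable.
Set Implicit Arguments. Unset Strict Implicit. Unset Printing Implicit Defensive.
Local Open Scope group_scope.

Fixpoint pos_span (gT : finGroupType) (A : {set gT}) (rho : nat) : {set gT} :=
  match rho with
  | 0 => [set 1]
  | n.+1 => pos_span A n * (1 |: A)
  end.

Definition is_posdiam (gT : finGroupType) (G A : {set gT}) (d : nat) : Prop :=
  pos_span A d = G /\ (forall rho, pos_span A rho = G -> (d <= rho)%N).

Definition is_absdiam (gT : finGroupType) (G : {set gT}) (d : nat) : Prop :=
  (exists A : {set gT}, [/\ A \subset G, <<A>> = G & is_posdiam G A d]) /\
  (forall A : {set gT}, A \subset G -> <<A>> = G ->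
     exists d', is_posdiam G A d' /\ (d' <= d)%N).

Definition has_type (gT : finGroupType) (G : {set gT}) (m : seq nat) : Prop :=
  [/\ all (fun x => 1 < x)%N m, sorted dvdn m &
      exists b : seq gT, \big[dprod/1]_(x <- b) <[x]> = G /\ map order b = m].

(* Main.v *)
Require Import Defs.
From mathcomp Require Import all_boot all_order all_fingroup all_solvable.
From Stdlib Require Import Lia.
Set Implicit Arguments. Unset Strict Implicit. Unset Printing Implicit Defensive.

Definition dsort (L : seq nat) := all (fun x => 0 < x) L && sorted (fun a b => b %| a) L.

Lemma nth_cnt L p n k : dsort L ->
  (n < logn p (nth 1 L k)) = (k < count (fun x => n < logn p x) L).
Proof.
elim: L k => [|x L IH] k /=; first by rewrite nth_nil logn1.
case/andP=> /andP[x0 L0] srt.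
have srt' := path_sorted srt.
have trans : transitive (fun a b : nat => b %| a).
  by move=> a b c /= H1 H2; apply: dvdn_trans H2 H1.
have allx := order_path_min trans srt.
have IH' := IH _ (introT andP (conj L0 srt')).
case Hx: (n < logn p x) => /=.
  by case: k => [|k] //=; rewrite IH' add1n ltnS.
have c0 : count (fun x0 => n < logn p x0) L = 0.
  apply/eqP; rewrite -leqn0 leqNgt -has_count; apply/hasPn => y yL.
  rewrite -leqNgt; apply: leq_trans (dvdn_leq_log _ _ (allP allx y yL)) _ => //.
  by rewrite leqNgt Hx.
case: k => [|k] /=; first by rewrite c0.
by rewrite IH' c0.
Qed.

Lemma nth_pos L k : dsort L -> 0 < nth 1 L k.
Proof.
case/andP=> L0 _; case: (ltnP k (size L)) => H; last by rewrite nth_default.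
by apply: (allP L0); rewrite mem_nth.
Qed.

Lemma dvd_cnt L1 L2 e k : dsort L1 -> dsort L2 ->
  (forall p n, prime p -> count (fun x => n < logn p x) L1 <= count (fun x => n < logn p x) L2 + e) ->
  nth 1 L1 (k + e) %| nth 1 L2 k.
Proof.
move=> s1 s2 H.
apply/dvdn_partP; first exact: nth_pos.
move=> p; rewrite mem_primes => /andP[pp _].
rewrite p_part pfactor_dvdn //; last exact: nth_pos.
rewrite leqNgt; apply/negP; set nn := logn p (nth 1 L2 k) => Hlt.
move: Hlt; rewrite nth_cnt // => Hlt.
have := leq_trans Hlt (H p nn pp).
rewrite ltn_add2r -nth_cnt // ltnn //.
Qed.

Lemma tele s : forall M Q : nat -> nat,
  (forall k, 0 < Q k) -> (forall k, 0 < M k) ->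
  (forall k, Q k %| M k) -> (forall k, M k.+1 %| Q k) ->
  (forall k, s <= k -> M k = 1) ->
  exists t, [/\ \prod_(k < s) M k = t * \prod_(k < s) Q k,
     t <= M 0 & \sum_(k < s) (Q k - 1) + t <= \sum_(k < s) (M k - 1) + 1].
Proof.
elim: s => [|s IH] M Q Q0 M0 QM MQ M1.
  by exists 1; split; rewrite ?big_ord0 ?M1.
have [t' [Pt' tM1 St']] := IH (fun k => M k.+1) (fun k => Q k.+1)
  (fun k => Q0 _) (fun k => M0 _) (fun k => QM _) (fun k => MQ _) (fun k Hk => M1 k.+1 Hk).
have [t0 Ht0] := dvdnP (QM 0).
exists (t0 * t'); rewrite !big_ord_recl; split.
- by rewrite Pt' Ht0 mulnACA.
- rewrite Ht0 leq_mul2l; apply/orP; right.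
  exact: leq_trans tM1 (dvdn_leq (Q0 0) (MQ 0)).
- have t0p : 0 < t0 by move: (M0 0); rewrite Ht0 muln_gt0 => /andP[].
  have tQ : t' <= Q 0 by exact: leq_trans tM1 (dvdn_leq (Q0 0) (MQ 0)).
  have key : Q 0 + t0 * t' <= t0 * Q 0 + t'.
    have e1 : t0 * t' = (t0 - 1) * t' + t' by rewrite mulnBl mul1n subnK // leq_pmull.
    have e2 : t0 * Q 0 = (t0 - 1) * Q 0 + Q 0 by rewrite mulnBl mul1n subnK // leq_pmull.
    have h := leq_mul (leqnn (t0 - 1)) tQ.
    rewrite e1 e2; move: h; move: ((t0 - 1) * t') ((t0 - 1) * Q 0) => u v h.
    move/leP: h => h; apply/leP; rewrite -!plusE in h *; lia.
  have q0 := Q0 0; have := M0 0; rewrite Ht0 => m0.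
  move: key St'; rewrite /=.
  set X := \sum_(i < s) (Q i.+1 - 1); set Y := \sum_(i < s) (M i.+1 - 1).
  move: (t0 * t') (t0 * Q 0) m0 => u v m0.
  move=> k1 k2; move/leP: k1 => k1; move/leP: k2 => k2; apply/leP.
  move/ltP: q0 => q0; move/ltP: m0 => m0.
  rewrite -!plusE -!minusE in k1 k2 *. lia.
Qed.

Lemma sum_nth (L : seq nat) N : size L <= N ->
  \sum_(x <- L) (x - 1) = \sum_(k < N) (nth 1 L k - 1).
Proof.
elim: L N => [|x L IH] N /=; first by rewrite big_nil big1 // => i _; rewrite nth_nil.
case: N => [|N] //= H; rewrite big_cons big_ord_recl /=; congr (_ + _).
exact: IH.
Qed.

Lemma prod_nth (L : seq nat) N : size L <= N ->
  \prod_(x <- L) x = \prod_(k < N) nth 1 L k.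
Proof.
elim: L N => [|x L IH] N /=; first by rewrite big_nil big1 // => i _; rewrite nth_nil.
case: N => [|N] //= H; rewrite big_cons big_ord_recl /=; congr (_ * _).
exact: IH.
Qed.
Set Implicit Arguments. Unset Strict Implicit. Unset Printing Implicit Defensive.
Local Open Scope group_scope.

Section G.
Variable gT : finGroupType.

Lemma rp_Mho_cycle p n (x : gT) : prime p ->
  'r_p('Mho^n(<[x]>)) = (n < logn p #[x])%N.
Proof.
move=> pp.
pose y := x.`_p; have p_y: p.-elt y by rewrite p_elt_constt.
have cXX := cycle_abelian x.
have co_yx': coprime #[y] #[x.`_p^'] by rewrite !order_constt coprime_partC.
have defX: <[y]> \x <[x.`_p^']> = <[x]>.
  rewrite dprodE ?coprime_TIg //.
    by rewrite -cycleM ?consttC //; apply: (centsP cXX); apply: mem_cycle.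
  by apply: (sub_abelian_cent2 cXX); rewrite cycle_subG mem_cycle.
have := p_rank_dprod p (Mho_dprod n defX).
move=> <-.
have -> : 'r_p('Mho^n(<[x.`_p^']>)) = 0%N.
  apply/eqP; rewrite -leqn0; apply: leq_trans (p_rankS p (Mho_sub n _)) _.
  rewrite leqn0 -[_ == _]negbK -lt0n p_rank_gt0 -p'groupEpi.
  by rewrite /pgroup -orderE; apply: p_elt_constt.
rewrite addn0 /= (Mho_p_cycle n p_y) -rank_pgroup; last first.
  by rewrite /pgroup -orderE; apply: p_eltX.
rewrite rank_cycle -order_dvdn order_constt p_part dvdn_Pexp2l ?prime_gt1 //.
by rewrite ltnNge.
Qed.

Lemma rp_Mho_count p n (b : seq gT) (G : {group gT}) : prime p ->
  \big[dprod/1]_(x <- b) <[x]> = G ->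
  'r_p('Mho^n(G)) = count (fun x => n < logn p #[x])%N b.
Proof.
move=> pp; elim: b G => [|x b IHb] G /=.
  by rewrite big_nil => <-; rewrite Mho1 p_rank1.
rewrite big_cons => defG; have defG' := defG.
case/dprodP: defG => [[_ H _ defH] _ _ _].
rewrite defH in defG'.
rewrite -(p_rank_dprod p (Mho_dprod n defG')) rp_Mho_cycle // (IHb H) //.
Qed.

Lemma rp_Mho_quo p n (G : {group gT}) (a : gT) : abelian G -> a \in G ->
  ('r_p('Mho^n(G / <[a]>)) <= 'r_p('Mho^n(G)))%N /\
  ('r_p('Mho^n(G)) <= 'r_p('Mho^n(G / <[a]>)) + 1)%N.
Proof.
move=> cGG Ga.
have nCG : G \subset 'N(<[a]>).
  by rewrite cents_norm // (sub_abelian_cent2 cGG) ?cycle_subG.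
rewrite -(@morphim_Mho n _ _ _ _ (coset_morphism <[a]>) nCG).
have -> : coset_morphism <[a]> @* 'Mho^n(G) = 'Mho^n(G) / <[a]> by [].
split; first by apply: quotient_p_rank_abelian; apply: abelianS (Mho_sub n G) cGG.
have := p_rank_quotient p (subset_trans (Mho_sub n G) nCG) (H := <[a]>%G).
rewrite leq_subLR => h; apply: leq_trans h _; rewrite [X in (X <= _)%N]addnC leq_add2l.
by apply: leq_trans (p_rank_le_rank p _) _; rewrite rank_cycle leq_b1.
Qed.
End G.
Section PS.
Variable gT : finGroupType.
Implicit Types (A B : {set gT}).

Lemma ps1 A k : 1 \in pos_span A k.
Proof. elim: k => [|k IH] /=; first by rewrite inE. by rewrite -[X in X \in _]mulg1 mem_mulg // setU11. Qed.

Lemma ps_gen A k : pos_span A k \subset <<A>>.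
Proof.
elim: k => [|k IH] /=; first by rewrite sub1G.
apply/subsetP=> _ /mulsgP[x y Hx Hy ->]; apply: groupM; first exact: (subsetP IH).
case/setU1P: Hy => [->|]; first exact: group1.
by move=> Ay; apply: mem_gen.
Qed.

Lemma ps_mono A j k : j <= k -> pos_span A j \subset pos_span A k.
Proof.
elim: k => [|k IH]; first by rewrite leqn0 => /eqP ->.
rewrite leq_eqVlt => /orP[/eqP -> //|/IH sub].
by apply: subset_trans sub (mulg_subl _ (setU11 _ _)).
Qed.

Lemma ps_add A j k : pos_span A (j + k) = pos_span A j * pos_span A k.
Proof.
elim: k => [|k IH] /=; first by rewrite addn0 mulg1.
by rewrite addnS /= IH mulgA.
Qed.

Lemma ps_exp A a j : a \in A -> a ^+ j \in pos_span A j.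
Proof.
move=> Aa; elim: j => [|j IH] /=; first by rewrite inE.
by rewrite expgSr mem_mulg // setU1r.
Qed.
End PS.

Section Main.

Definition dstar (gT : finGroupType) (G : {set gT}) := (\sum_(x <- abelian_type G) (x - 1))%N.

Lemma AT_dsort (gT : finGroupType) (G : {set gT}) : dsort (abelian_type G).
Proof.
apply/andP; split; last exact: abelian_type_dvdn_sorted.
apply/allP=> x xG; have := allP (abelian_type_gt1 G) x xG => /= h.
exact: ltnW.
Qed.

Lemma cnt_AT (gT : finGroupType) p n (G : {group gT}) : abelian G -> prime p ->
  count (fun x => n < logn p x)%N (abelian_type G) = 'r_p('Mho^n(G)).
Proof.
move=> cGG pp; have [b defG def_t] := abelian_structure cGG.
by rewrite -def_t count_map (rp_Mho_count n pp defG).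
Qed.

Lemma card_AT (gT : finGroupType) (G : {group gT}) : abelian G ->
  (\prod_(x <- abelian_type G) x)%N = #|G|.
Proof.
move=> cGG; have [b defG def_t] := abelian_structure cGG.
by rewrite -def_t big_map -(bigdprod_card defG).
Qed.

Lemma lift_ps (gT : finGroupType) (H : {group gT}) (A : {set gT}) k y :
  A \subset 'N(H) -> y \in pos_span (A / H) k ->
  exists2 x, x \in pos_span A k & y = coset H x.
Proof.
move=> nHA; have sPN j : pos_span A j \subset 'N(H).
  by apply: subset_trans (ps_gen A j) _; rewrite gen_subG.
elim: k y => [|k IH] y /=.
  by rewrite inE => /eqP ->; exists 1; rewrite ?inE ?morph1.
case/mulsgP=> y1 z /IH[x1 Px1 ->] Hz ->.
case/setU1P: Hz => [->|].
  by exists (x1 * 1); [rewrite mem_mulg // setU11 | rewrite !mulg1].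
case/morphimP=> w Nw Aw ->.
exists (x1 * w); first by rewrite mem_mulg // setU1r.
by rewrite morphM // (subsetP (sPN k)).
Qed.

Lemma dstar_quo (gT : finGroupType) (G : {group gT}) (a : gT) :
  abelian G -> a \in G -> (dstar (G / <[a]>) + #[a] <= dstar G + 1)%N.
Proof.
move=> cGG Ga.
have cHH : abelian (G / <[a]>) by apply: quotient_abelian.
set LG := abelian_type G; set LH := abelian_type (G / <[a]>).
set s := (size LG + size LH)%N.
have sG : (size LG <= s)%N by apply: leq_addr.
have sH : (size LH <= s)%N by apply: leq_addl.
have dG := AT_dsort G; have dH := AT_dsort (G / <[a]>).
have QM k : nth 1%N LH k %| nth 1%N LG k.
  have := @dvd_cnt LH LG 0 k dH dG; rewrite addn0; apply => p n pp.
  rewrite addn0 /LG /LH !cnt_AT //; exact: (rp_Mho_quo p n cGG Ga).1.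
have MQ k : nth 1%N LG k.+1 %| nth 1%N LH k.
  have := @dvd_cnt LG LH 1 k dG dH; rewrite addn1; apply => p n pp.
  rewrite /LG /LH !cnt_AT //; exact: (rp_Mho_quo p n cGG Ga).2.
have M1 k : (s <= k)%N -> nth 1%N LG k = 1%N.
  by move=> Hk; rewrite nth_default //; exact: leq_trans sG Hk.
have [t [Pt _ St]] := @tele s (fun k => nth 1%N LG k) (fun k => nth 1%N LH k)
  (fun k => nth_pos k dH) (fun k => nth_pos k dG) QM MQ M1.
rewrite -!prod_nth // in Pt.
rewrite /LG /LH !card_AT // in Pt.
have nCG : G \subset 'N(<[a]>).
  by rewrite cents_norm // (sub_abelian_cent2 cGG) ?cycle_subG.
have ht : t = #[a].
  apply/eqP; rewrite -(eqn_pmul2r (cardG_gt0 (G / <[a]>))) -Pt.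
  by rewrite card_quotient // orderE Lagrange ?cycle_subG.
have eG : dstar G = \sum_(k < s) (nth 1%N LG k - 1)%N := sum_nth sG.
have eH : dstar (G / <[a]>) = \sum_(k < s) (nth 1%N LH k - 1)%N := sum_nth sH.
by rewrite eG eH -ht.
Qed.

Lemma upper n : forall (gT : finGroupType) (G : {group gT}) (A : {set gT}),
  (#|G| <= n)%N -> abelian G -> A \subset G -> <<A>> = G ->
  pos_span A (dstar G) = G.
Proof.
elim: n => [|n IH] gT G A; first by rewrite leqNgt cardG_gt0.
move=> leG cGG sAG genA.
have sub k : pos_span A k \subset G by rewrite -genA; apply: ps_gen.
apply/eqP; rewrite eqEsubset sub /=.
case: (boolP (A \subset [1])) => [A1 | /subsetPn [a Aa na1]].
  have G1 : G \subset [1] by rewrite -genA gen_subG.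
  by apply: subset_trans G1 _; rewrite sub1set ps1.
have Ga : a \in G := subsetP sAG a Aa.
have nCG : G \subset 'N(<[a]>).
  by rewrite cents_norm // (sub_abelian_cent2 cGG) ?cycle_subG.
have ntC : <[a]> != 1.
  by rewrite cycle_eq1; apply: contra na1 => /eqP ->; exact: group1.
have ltH : (#|G / <[a]>| <= n)%N.
  by rewrite -ltnS (leq_trans _ leG) // ltn_quotient // cycle_subG.
have sAN : A \subset 'N(<[a]>) := subset_trans sAG nCG.
have genq : << (A / <[a]>) >> = G / <[a]> by rewrite -quotient_gen // genA.
have IHq := IH _ (G / <[a]>)%G (A / <[a]>) ltH (quotient_abelian _ cGG)
  (quotientS _ sAG) genq.
apply/subsetP => g Gg.
have : coset <[a]> g \in pos_span (A / <[a]>) (dstar (G / <[a]>)).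
  by rewrite IHq mem_quotient.
case/(lift_ps sAN) => x Px ex.
have Nx : x \in 'N(<[a]>) := subsetP nCG x (subsetP (sub _) x Px).
have [z Cz ->] := kercoset_rcoset (subsetP nCG g Gg) Nx ex.
case/cycleP: Cz => i ->.
rewrite -expg_mod_order.
set j := (i %% #[a])%N.
have ltj : (j < #[a])%N by rewrite ltn_pmod ?order_gt0.
have cax : commute (a ^+ j) x.
  apply: (centsP cGG); first by rewrite groupX.
  exact: (subsetP (sub _) x Px).
rewrite cax.
have hle : (dstar (G / <[a]>) + j <= dstar G)%N.
  clear cax; have := dstar_quo cGG Ga.
  move: ltj; move: (dstar _) (dstar _) j #[a] => u v w o h1 h2.
  move/leP: h1 => h1; move/leP: h2 => h2; apply/leP. rewrite -!plusE in h1 h2 *. lia.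
apply: (subsetP (ps_mono A hle)).
by rewrite ps_add mem_mulg // ps_exp.
Qed.
End Main.

Section Fin.
Variable gT : finGroupType.

Lemma gen_b (b : seq gT) (G : {group gT}) : \big[dprod/1]_(x <- b) <[x]> = G ->
  [set:: b] \subset G /\ <<[set:: b]>> = G.
Proof.
elim: b G => [|x b IHb] G.
  rewrite big_nil => <-; split; first by apply/subsetP=> y; rewrite inE.
  have -> : [set:: [::]] = set0 :> {set gT} by apply/setP=> y; rewrite !inE.
  exact: gen0.
rewrite big_cons => defG; have defG' := defG.
case/dprodP: defG => [[_ H _ defH] defG _ _].
rewrite defH in defG'.
have [sbH genH] := IHb H defH.
have defG2 : <[x]> * H = G by case/dprodP: defG'.
have sH : H \subset G by rewrite -defG2 mulG_subr.
have Gx : x \in G by rewrite -defG2 (subsetP (mulG_subl _ _)) ?cycle_id.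
have sub : [set:: x :: b] \subset G.
  by rewrite set_cons subUset sub1set Gx (subset_trans sbH sH).
split => //; apply/eqP; rewrite eqEsubset gen_subG sub /= -{1}defG2 mul_subG //.
  by rewrite cycle_subG mem_gen // set_cons setU11.
by rewrite -genH genS // set_cons subsetUr.
Qed.

Lemma decomp (x : gT) (B : {set gT}) (H : {group gT}) k y :
  B \subset H -> x \in 'C(H) -> y \in pos_span (x |: B) k ->
  exists i, exists2 h, (i <= k)%N /\ h \in pos_span B (k - i) & y = x ^+ i * h.
Proof.
move=> sBH cxH; elim: k y => [|k IH] y /=.
  by rewrite inE => /eqP ->; exists 0%N, 1; rewrite ?inE ?mulg1.
case/mulsgP=> y1 z /IH[i [h [ik Ph] ->]] Hz ->.
have Hh : h \in H by apply: (subsetP (subset_trans (ps_gen _ _) _) h Ph); rewrite gen_subG.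
case/setU1P: Hz => [->|].
  exists i, h; last by rewrite mulg1.
  split; first exact: leqW.
  by apply: (subsetP (ps_mono _ _)) Ph; rewrite leq_sub2r.
case/setU1P => [->|Bz].
  exists i.+1, h; first by rewrite subSS.
  rewrite expgSr -!mulgA; congr (_ * _).
  by symmetry; apply: (centP cxH).
exists i, (h * z); last by rewrite mulgA.
split; first exact: leqW.
by rewrite subSn //= mem_mulg // setU1r.
Qed.

Lemma lower (b : seq gT) (G : {group gT}) : \big[dprod/1]_(x <- b) <[x]> = G ->
  forall rho, \prod_(x <- b) x ^+ (#[x] - 1) \in pos_span [set:: b] rho ->
  (\sum_(x <- b) (#[x] - 1) <= rho)%N.
Proof.
elim: b G => [|x b IHb] G; first by rewrite big_nil.
move=> defG; rewrite big_cons in defG; have defG' := defG.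
case/dprodP: defG => [[_ H _ defH] _ cxH tixH].
rewrite defH in defG' tixH cxH.
have [sbH _] := gen_b defH.
move=> rho; rewrite big_cons (set_cons x b) big_cons.
have cx : x \in 'C(H) by rewrite -cycle_subG centsC.
case/(decomp sbH cx) => i [h [ik Ph] eq].
set g := \prod_(y <- b) y ^+ (#[y] - 1) in eq *.
have gH' : g \in H.
  by rewrite /g big_seq; apply: group_prod => y yb; apply: groupX; apply: (subsetP sbH); rewrite inE.
have hH : h \in H.
  by apply: (subsetP (subset_trans (ps_gen _ _) _) h Ph); rewrite gen_subG.
have e1 : (x ^+ i)^-1 * x ^+ (#[x] - 1) = h * g^-1.
  by rewrite -(mulgK g (x ^+ (#[x] - 1))) eq -mulgA mulKg.
have t1 : (x ^+ i)^-1 * x ^+ (#[x] - 1) \in <[x]> :&: H.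
  rewrite in_setI; apply/andP; split.
    by rewrite groupM ?groupV ?groupX ?cycle_id.
  by rewrite e1 groupM ?groupV.
move: t1; rewrite tixH inE => /eqP t1.
have : x ^+ i == x ^+ (#[x] - 1) by rewrite eq_mulVg1 t1.
rewrite eq_expg_mod_order => /eqP emod.
have hg : h = g by apply/eqP; rewrite eq_mulgV1 -e1 t1.
rewrite hg in Ph.
have Hb := IHb H defH _ Ph.
have le1 : (#[x] - 1 <= i)%N.
  have hm : ((#[x] - 1) %% #[x] = #[x] - 1)%N.
    by rewrite modn_small // subn1 prednK ?order_gt0.
  by rewrite -hm -emod; apply: leq_mod.
move: ik le1 Hb; move: (#[x] - 1)%N (\sum_(_ <- _) _)%N => u v ik le1 Hb.
move/leP: ik => ik; move/leP: le1 => le1; move/leP: Hb => Hb; apply/leP.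
rewrite -!plusE -!minusE in ik le1 Hb *; lia.
Qed.
End Fin.

Lemma dstar_type (gT : finGroupType) (G : {group gT}) (m : seq nat) (b : seq gT) :
  abelian G -> all (fun x => 1 < x)%N m -> sorted dvdn m ->
  \big[dprod/1]_(x <- b) <[x]> = G -> map order b = m ->
  dstar G = (\sum_(mi <- m) (mi - 1))%N.
Proof.
move=> cGG m1 srt defG om.
have dR : dsort (rev m).
  apply/andP; split; last by rewrite rev_sorted.
  by rewrite all_rev; apply/allP => x xm; apply: ltnW; apply: (allP m1).
have dA := AT_dsort G.
have cnt p n : prime p -> count (fun x => n < logn p x)%N (rev m) =
    count (fun x => n < logn p x)%N (abelian_type G).
  move=> pp; rewrite count_rev -om count_map cnt_AT //.
  by rewrite (rp_Mho_count n pp defG).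
set N := (size (rev m) + size (abelian_type G))%N.
have s1 : (size (abelian_type G) <= N)%N by apply: leq_addl.
have s2 : (size (rev m) <= N)%N by apply: leq_addr.
rewrite -(big_rev _ m) /dstar (sum_nth s1) (sum_nth s2).
apply: eq_bigr => k _; congr (_ - _)%N.
apply/eqP; rewrite eqn_dvd; apply/andP; split.
  have := @dvd_cnt (abelian_type G) (rev m) 0 k dA dR; rewrite addn0; apply => p n pp.
  by rewrite addn0 cnt.
have := @dvd_cnt (rev m) (abelian_type G) 0 k dR dA; rewrite addn0; apply => p n pp.
by rewrite addn0 cnt.
Qed.

Theorem theorem2p1 (gT : finGroupType) (G : {group gT}) (m : seq nat) :
  abelian G -> has_type G m ->
  is_absdiam G (\sum_(mi <- m) (mi - 1))%N.
Proof.
move=> cGG [m1 srt [b [defG om]]].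
have hd := dstar_type cGG m1 srt defG om.
have [sA genA] := gen_b defG.
have up := upper (leqnn _) cGG sA genA.
rewrite -hd; split.
  exists [set:: b]; split => //; split => // rho Prho.
  have gG : \prod_(x <- b) x ^+ (#[x] - 1) \in G.
    rewrite big_seq; apply: group_prod => y yb; apply: groupX.
    by apply: (subsetP sA); rewrite inE.
  rewrite -Prho in gG; have := lower defG gG.
  by rewrite hd -om big_map.
move=> A sAG genA'.
have ex : exists rho, pos_span A rho == G by exists (dstar G); rewrite (upper (leqnn _) cGG sAG genA').
case: (ex_minnP ex) => d /eqP Hd Hmin.
exists d; split; first split => //.
  by move=> rho Hr; apply: Hmin; rewrite Hr.
by apply: Hmin; rewrite (upper (leqnn _) cGG sAG genA').
Qed.
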